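(* Let $(X,d)$ be a complete cone metric space (in the setting described in the context). Let $L:E\to E$ be a positive linear operator, $\delta\in\mathcal{K}_+(E)$, and let $T:X\to B(X)$ be a $(\delta,L)$-weak contraction, i.e. $H(Tx,Ty)\preceq\delta\,d(x,y)+L\,d(y,Tx)$ for all $x,y\in X$, which satisfies condition (S). Suppose that the function $\varphi_T(x)=d(x,Tx)$ belongs to $\mathcal{LS}(X)$. Then there exists $x^*\in X$ with $x^*\in Tx^*$.
   Context: Let $E$ be a real topological vector space with zero element $\theta$, and $P\subseteq E$ a cone, i.e. a nonempty closed subset with $P\cap(-P)=\{\theta\}$ and $\lambda P+P\subseteq P$ for all $\lambda\ge 0$. Write $x\preceq y$ iff $y-x\in P$; $x\ll y$ iff $y-x\in\mathrm{int}(P)$. Standing assumptions: $E$ with this order is a Riesz space (every pair has an infimum) and is $\sigma$-order complete (every decreasing sequence bounded from below has an infimum). A cone metric space is a pair $(X,d)$ with $X$ nonempty and $d:X\times X\to E$ such that $d(x,y)=\theta$ iff $x=y$, and $d(x,y)\preceq d(x,z)+d(y,z)$ for all $x,y,z$. A sequence $(x_n)$ converges to $x$ iff for every $\epsilon\gg\theta$ there is $N$ with $d(x_n,x)\ll\epsilon$ for $n\ge N$; it is Cauchy iff for every $\epsilon\gg\theta$ there is $N$ with $d(x_m,x_n)\ll\epsilon$ for $m,n\ge N$; $X$ is complete iff every Cauchy sequence converges. A set $F\subseteq X$ is closed iff limits of convergent sequences in $F$ lie in $F$. $\varphi:X\to E$ is lower semicontinuous iff $\{x:\varphi(x)\preceq\alpha\}$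 is closed for every $\alpha\in E$, and bounded below iff some $b\in E$ satisfies $b\preceq\varphi(x)$ for all $x$; $\mathcal{LS}(X)$ is the set of lower semicontinuous, bounded below functions $X\to E$. $B(X)$ is the family of nonempty bounded subsets of $X$. For $x\in X$ and nonempty $A\subseteq X$, $d(x,A)=\inf_{y\in A}d(x,y)$, and for $A,B\in B(X)$, $H(A,B)=\sup\{\sup_{x\in A}d(x,B),\sup_{y\in B}d(y,A)\}$ (infima and suprema in the order $\preceq$, assumed to exist). A linear operator $L:E\to E$ is positive if $LP\subseteq P$. $\mathcal{K}_+(E)$ is the set of all positive, injective, continuous linear operators $\delta:E\to E$ for which there exists $0\le t<1$ with $\theta\preceq\delta x\preceq tx$ for all $x\in P$. A selector of $T$ is a function $f:X\to X$ with $f(x)\in Tx$ for all $x$. $T$ satisfies condition (S) if for every $\epsilon>0$ there is a selector $f_\epsilon$ of $T$ with $d(x,f_\epsilon(x))\preceq(1+\epsilon)d(x,Tx)$ for all $x\in X$. *)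

(* Defs.v *)
From HB Require Import structures.
From mathcomp Require Import all_boot all_order all_algebra.
From mathcomp Require Import all_classical all_reals all_analysis.
Set Implicit Arguments. Unset Strict Implicit. Unset Printing Implicit Defensive.
Import Order.TTheory GRing.Theory Num.Theory.
Local Open Scope classical_set_scope.
Local Open Scope ring_scope.

Section ConeDefs.
Context {R : realType} {E : topologicalLmodType R}.
Variable P : set E.

Definition is_cone : Prop :=
  [/\ P !=set0, closed P, P `&` [set - x | x in P] = [set 0] &
      forall (l : R) x y, 0 <= l -> P x -> P y -> P (l *: x + y)].

Definition cle (x y : E) : Prop := P (y - x).
Definition cll (x y : E) : Prop := (interior P) (y - x).

Definition is_lbound (S : set E) (a : E) := forall s, S s -> cle a s.
Definition is_ubound (S : set E) (a : E) := forall s, S s -> cle s a.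
Definition is_inf (S : set E) (a : E) :=
  is_lbound S a /\ forall b, is_lbound S b -> cle b a.
Definition is_sup (S : set E) (a : E) :=
  is_ubound S a /\ forall b, is_ubound S b -> cle a b.

Definition riesz_space := forall x y : E, exists a, is_inf [set x; y] a.
Definition sigma_order_complete :=
  forall u : nat -> E, (forall n, cle (u n.+1) (u n)) ->
    (exists b, is_lbound (range u) b) -> exists a, is_inf (range u) a.

(* chosen infimum / supremum (meaningful when they exist) *)
Definition cinf (S : set E) : E := xget 0 (is_inf S).
Definition csup (S : set E) : E := xget 0 (is_sup S).

Section ConeMetric.
Context {X : Type}.
Variable d : X -> X -> E.

Definition is_cone_metric :=
  (forall x y, d x y = 0 <-> x = y) /\
  (forall x y z, cle (d x y) (d x z + d y z)).

Definition cm_cvg (u : nat -> X) (x : X) :=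
  forall e, cll 0 e -> exists N, forall n, (N <= n)%N -> cll (d (u n) x) e.
Definition cm_cauchy (u : nat -> X) :=
  forall e, cll 0 e -> exists N, forall m n, (N <= m)%N -> (N <= n)%N ->
    cll (d (u m) (u n)) e.
Definition cm_complete :=
  forall u, cm_cauchy u -> exists x, cm_cvg u x.
Definition cm_closed (F : set X) :=
  forall u x, (forall n, F (u n)) -> cm_cvg u x -> F x.

Definition cm_lsc (phi : X -> E) :=
  forall alpha, cm_closed [set x | cle (phi x) alpha].
Definition bounded_below (phi : X -> E) :=
  exists b, forall x, cle b (phi x).
Definition LS (phi : X -> E) := cm_lsc phi /\ bounded_below phi.

Definition cm_bounded (A : set X) :=
  exists c, forall a b, A a -> A b -> cle (d a b) c.
Definition BX (A : set X) := A !=set0 /\ cm_bounded A.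

Definition dset (x : X) (A : set X) : E := cinf [set d x y | y in A].
Definition hausd (A B : set X) : E :=
  csup [set csup [set dset x B | x in A]; csup [set dset y A | y in B]].

(* standing assumption: the infima/suprema defining d(x,A), H(A,B) exist *)
Definition inf_sup_exist :=
  (forall x A, BX A -> exists a, is_inf [set d x y | y in A] a) /\
  (forall A B, BX A -> BX B -> exists a, is_sup [set dset x B | x in A] a).

End ConeMetric.

Definition positive_op (L : E -> E) := forall x, P x -> P (L x).

Definition Kplus (delta : E -> E) :=
  [/\ linear delta, positive_op delta, injective delta, continuous delta &
      exists t : R, 0 <= t < 1 /\
        forall x, P x -> cle 0 (delta x) /\ cle (delta x) (t *: x)].

End ConeDefs.

Definition condition_S {R : realType} {E : topologicalLmodType R} (P : set E)
  {X : Type} (d : X -> X -> E) (T : X -> set X) :=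
  forall eps : R, 0 < eps -> exists f : X -> X,
    (forall x, T x (f x)) /\
    (forall x, cle P (d x (f x)) ((1 + eps) *: dset P d x (T x))).

(* Main.v *)
Require Import Defs.
From HB Require Import structures.
From mathcomp Require Import all_boot all_order all_algebra.
From mathcomp Require Import all_classical all_reals all_analysis.
From mathcomp Require Import ring lra.
Import Order.TTheory GRing.Theory Num.Theory.
Import numFieldTopology.Exports numFieldNormedType.Exports.
Set Implicit Arguments. Unset Strict Implicit.
Local Open Scope classical_set_scope.
Local Open Scope ring_scope.
Section Cone.
Context {R : realType} {E : topologicalLmodType R}.
Variable P : set E.
Hypothesis hP : is_cone P.

Lemma P0 : P 0.
Proof.
case: hP => _ _ Heq _.
have : ([set 0] : set E) 0 by [].
by rewrite -Heq => -[].
Qed.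

Lemma Pantisym {x} : P x -> P (- x) -> x = 0.
Proof.
case: hP => _ _ Heq _ Px Pnx.
have : (P `&` [set - y | y in P]) x by split => //; exists (- x) => //; rewrite opprK.
by rewrite Heq.
Qed.

Lemma PD {x y} : P x -> P y -> P (x + y).
Proof. case: hP => _ _ _ H Px Py; have := H 1 x y ler01 Px Py; by rewrite scale1r. Qed.

Lemma PZ {l x} : 0 <= l -> P x -> P (l *: x).
Proof. case: hP => _ _ _ H l0 Px; have := H l x 0 l0 Px P0; by rewrite addr0. Qed.

Lemma cle_refl x : cle P x x.
Proof. by rewrite /cle subrr; exact: P0. Qed.

Lemma cle_trans x y z : cle P x y -> cle P y z -> cle P x z.
Proof.
rewrite /cle => h1 h2; have := PD h2 h1.
by rewrite addrA subrK.
Qed.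

Lemma cle_add a b c e : cle P a b -> cle P c e -> cle P (a + c) (b + e).
Proof.
rewrite /cle => h1 h2; have := PD h1 h2.
by rewrite opprD addrACA.
Qed.

Lemma cle_scale l a b : 0 <= l -> cle P a b -> cle P (l *: a) (l *: b).
Proof. by rewrite /cle => l0 h; rewrite -scalerBr; exact: PZ. Qed.

Lemma cle_scale_r l1 l2 v : l1 <= l2 -> P v -> cle P (l1 *: v) (l2 *: v).
Proof. by rewrite /cle => l12 Pv; rewrite -scalerBl; apply: PZ => //; rewrite subr_ge0. Qed.

Lemma cle_antisym a b : cle P a b -> cle P b a -> a = b.
Proof.
rewrite /cle => h1 h2; apply/eqP; rewrite eq_sym -subr_eq0; apply/eqP.
by apply: Pantisym => //; rewrite opprB.
Qed.

Lemma cle0P x : cle P 0 x <-> P x.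
Proof. by rewrite /cle subr0. Qed.


Lemma cvg_scale0 (c : nat -> R) (v : E) : c @ \oo --> (0:R) ->
  (fun n => c n *: v) @ \oo --> (0:E).
Proof.
move=> hc.
have hp : (fun n => (c n, v)) @ \oo --> (nbhs (0:R), nbhs v) := cvg_pair hc (cvg_cst v).
have hs : (fun z : R * E => z.1 *: z.2) @ (nbhs (0:R), nbhs v) --> (0:R) *: v :=
  (@scale_continuous R E ((0:R^o), v)).
have h := cvg_comp _ _ (hp _ _ _ _) hs.
rewrite scale0r in h; exact: h.
Qed.

Lemma cvg_addl (u : nat -> E) (w a : E) : u @ \oo --> a ->
  (fun n => w + u n) @ \oo --> w + a.
Proof.
move=> hc.
have hp : (fun n => (w, u n)) @ \oo --> (nbhs w, nbhs a) := cvg_pair (cvg_cst w) hc.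
have hs : (fun z : E * E => z.1 + z.2) @ (nbhs w, nbhs a) --> w + a :=
  (@add_continuous E (w, a)).
exact: (cvg_comp _ _ (hp _ _ _ _) hs).
Qed.

Lemma cvg_affine (c : nat -> R) (v w : E) : c @ \oo --> (0:R) ->
  (fun n => w + c n *: v) @ \oo --> w.
Proof.
move=> hc; have := cvg_addl (w:=w) (@cvg_scale0 _ v hc).
by rewrite addr0.
Qed.

Lemma int_add a p : interior P a -> P p -> interior P (a + p).
Proof.
move=> ha hp.
have := @nbhsB_subproof R E P (@add_continuous E) a p ha.
rewrite /interior addrC; apply: filterS => y [z Pz <-].
by rewrite /=; apply: PD.
Qed.

Lemma ev_int (c : nat -> R) (e v : E) : interior P e -> c @ \oo --> (0:R) ->
  exists N, forall n, (N <= n)%N -> interior P (e - c n *: v).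
Proof.
move=> he hc.
have hc' : (fun n => - c n) @ \oo --> (0:R).
  by rewrite -oppr0; exact: cvgN.
have := @cvg_affine _ v e hc'.
move=> /(_ (interior P)).
have : nbhs e (interior P).
  by have := open_interior P; rewrite openE => /(_ e he).
move=> /[swap] /[apply] -[N _ HN].
exists N => n Nn; have := HN n Nn; by rewrite /= scaleNr.
Qed.


Section Metric.
Variables (X : Type) (d : X -> X -> E).
Hypothesis hd : is_cone_metric P d.
Hypothesis hex : inf_sup_exist P d.
Hypothesis hRiesz : riesz_space P.

Lemma d_self x : d x x = 0.
Proof. by case: hd => h _; apply/h. Qed.

Lemma d_sym x y : d x y = d y x.
Proof.
case: hd => _ ht; apply: cle_antisym.
  by have := ht x y x; rewrite d_self add0r.
by have := ht y x y; rewrite d_self add0r.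
Qed.

Lemma d_ge0 x y : P (d x y).
Proof.
case: hd => _ ht; have := ht x x y; rewrite d_self /cle subr0 => h.
have h2 : P (2^-1 *: (d x y + d x y)) by apply: PZ => //; rewrite invr_ge0.
suff -> : d x y = 2^-1 *: (d x y + d x y) by [].
have -> : d x y + d x y = 2%:R *: d x y by rewrite scaler_nat mulr2n.
by rewrite scalerA mulVf ?pnatr_eq0 // scale1r.
Qed.

Lemma dset_inf y A : BX P d A -> is_inf P [set d y z | z in A] (dset P d y A).
Proof. by move=> hA; rewrite /dset /cinf; apply: xgetPex; case: hex => h _; exact: h. Qed.

Lemma dset_ge0 y A : BX P d A -> P (dset P d y A).
Proof.
move=> hA; case: (dset_inf y hA) => _ h; apply/cle0P; apply: h => s [z _ <-].
by apply/cle0P; exact: d_ge0.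
Qed.

Lemma dset_mem y A : BX P d A -> A y -> dset P d y A = 0.
Proof.
move=> hA Ay; apply: cle_antisym; last by apply/cle0P; exact: dset_ge0.
case: (dset_inf y hA) => h _; rewrite -(d_self y); apply: h; by exists y.
Qed.

Lemma sup_pair a b : exists s, is_sup P [set a; b] s.
Proof.
case: (hRiesz (- a) (- b)) => m [hm1 hm2]; exists (- m); split.
  move=> s [->|->]; rewrite /cle addrC.
    by have := hm1 (- a) (or_introl erefl); rewrite /cle.
  by have := hm1 (- b) (or_intror erefl); rewrite /cle.
move=> u hu.
have : cle P (- u) m.
  apply: hm2 => s [->|->]; rewrite /cle opprK addrC.
    by have := hu a (or_introl erefl); rewrite /cle.
  by have := hu b (or_intror erefl); rewrite /cle.
by rewrite /cle !opprK addrC.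
Qed.

Lemma hausd_ge A B z : BX P d A -> BX P d B -> A z ->
  cle P (dset P d z B) (hausd P d A B).
Proof.
move=> hA hB Az.
have hs1 : is_sup P [set dset P d x B | x in A] (csup P [set dset P d x B | x in A]).
  by rewrite /csup; apply: xgetPex; case: hex => _ h; exact: h.
set c1 := csup P [set dset P d x B | x in A].
set c2 := csup P [set dset P d y A | y in B].
have hs2 : is_sup P [set c1; c2] (hausd P d A B).
  by rewrite /hausd /csup; apply: xgetPex; exact: sup_pair.
apply: (@cle_trans _ c1).
  by case: hs1 => h _; apply: h; exists z.
by case: hs2 => h _; apply: h; left.
Qed.

End Metric.
End Cone.

Unset Implicit Arguments. Set Strict Implicit.

Theorem theorem4 (R : realType) (E : topologicalLmodType R) (P : set E)
  (hP : is_cone P) (hRiesz : riesz_space P) (hsig : sigma_order_complete P)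
  (X : Type) (hX : inhabited X) (d : X -> X -> E) (hd : is_cone_metric P d)
  (hcomp : cm_complete P d) (hex : inf_sup_exist P d)
  (L delta : E -> E) (hL : linear L) (hLpos : positive_op P L)
  (hdelta : Kplus P delta)
  (T : X -> set X) (hT : forall x, BX P d (T x))
  (hcontr : forall x y, cle P (hausd P d (T x) (T y))
                              (delta (d x y) + L (dset P d y (T x))))
  (hS : condition_S P d T)
  (hphi : LS P d (fun x => dset P d x (T x))) :
  exists xs : X, T xs xs.
Proof.
case: hdelta => hdlin hdpos _ _ [t [/andP[t0 t1] ht]].
have t1p : 0 < 1 + t by lra.
set M : R := 2 / (1 + t).
have M1 : 1 < M by rewrite /M ltr_pdivlMr // mul1r; lra.
have M0 : 0 <= M by lra.
set eps := M - 1.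
have eps0 : 0 < eps by rewrite subr_gt0.
have Meps : 1 + eps = M by rewrite /eps addrCA subrr addr0.
set k := M * t.
have k0 : 0 <= k by rewrite mulr_ge0.
have k1 : k < 1 by rewrite /k /M mulrAC ltr_pdivrMr // mul1r; lra.
have k1' : k <= 1 by lra.
case: (hS eps eps0) => f [hfT hfd].
case: hX => x0.
pose x n := iter n f x0.
pose phi y := dset P d y (T y).
set v := phi x0.
have hv : P v by apply: (dset_ge0 hP hd hex).
have hxT n : T (x n) (x n.+1) by exact: hfT.
have hdx n : cle P (d (x n) (x n.+1)) (M *: phi (x n)) by rewrite -Meps; exact: hfd.
have hL0 : L 0 = 0 by have h := zmod_morphism_linear hL 0 0; rewrite !subrr in h.
have hdmono a b : cle P a b -> cle P (delta a) (delta b).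
  by rewrite /cle -(zmod_morphism_linear hdlin b a); exact: hdpos.
have hstep n : cle P (phi (x n.+1)) (k *: phi (x n)).
  apply: (cle_trans hP (hausd_ge hP hex hRiesz (hT (x n)) (hT (x n.+1)) (hxT n))).
  apply: (cle_trans hP (hcontr (x n) (x n.+1))).
  rewrite (dset_mem hP hd hex (hT (x n)) (hxT n)) hL0 addr0.
  apply: (cle_trans hP (hdmono _ _ (hdx n))).
  rewrite (scalable_linear hdlin) /k -scalerA.
  apply: (cle_scale hP M0).
  by case: (ht (phi (x n)) (dset_ge0 hP hd hex _ (hT _))).
have hphin n : cle P (phi (x n)) (k ^+ n *: v).
  elim: n => [|n IH]; first by rewrite expr0 scale1r; exact: cle_refl.
  apply: (cle_trans hP (hstep n)).
  rewrite exprS -scalerA; exact: (cle_scale hP k0).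
have hdx2 n : cle P (d (x n) (x n.+1)) ((M * k ^+ n) *: v).
  apply: (cle_trans hP (hdx n)); rewrite -scalerA; exact: (cle_scale hP M0).
pose B n := (M / (1 - k)) * k ^+ n.
have k1ne : 1 - k != 0 by rewrite subr_eq0 eq_sym lt_eqF.
have hB n : B n - B n.+1 = M * k ^+ n.
  by rewrite /B exprS; field.
have hB0 n : 0 <= B n.
  by rewrite /B; apply: mulr_ge0; [apply: mulr_ge0 => //; rewrite invr_ge0 subr_ge0 | exact: exprn_ge0].
have hdist n j : cle P (d (x n) (x (n + j)%N)) ((B n - B (n + j)%N) *: v).
  elim: j => [|j IH].
    by rewrite addn0 subrr scale0r (d_self hd); exact: cle_refl.
  rewrite addnS.
  have htr := hd.2 (x n) (x (n + j)%N.+1) (x (n + j)%N).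
  rewrite (d_sym hP hd (x (n + j)%N.+1)) in htr.
  apply: (cle_trans hP htr).
  have -> : (B n - B (n + j)%N.+1) *: v = (B n - B (n + j)%N) *: v + (M * k ^+ (n + j)%N) *: v.
    by rewrite -hB -scalerDl addrA subrK.
  exact: (cle_add hP IH (hdx2 (n + j)%N)).
have hdist2 N m n : (N <= m)%N -> (N <= n)%N -> cle P (d (x m) (x n)) (B N *: v).
  wlog mn : m n / (m <= n)%N.
    move=> H Nm Nn; case: (leqP m n) => [mn|/ltnW nm]; first exact: H.
    by rewrite (d_sym hP hd); exact: H.
  move=> Nm _; rewrite -(subnKC mn).
  apply: (cle_trans hP (hdist m (n - m)%N)).
  apply: (cle_scale_r hP) => //.
  have : B (m + (n - m))%N >= 0 := hB0 _.
  have : B m <= B N by rewrite /B ler_wpM2l ?ler_wiXn2l //; apply: mulr_ge0 => //; rewrite invr_ge0 subr_ge0.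
  lra.
have hBc : B @ \oo --> (0:R).
  have := @cvg_geometric R (M / (1 - k)) k.
  by rewrite ger0_norm // => /(_ k1).
have hcauchy : cm_cauchy P d x.
  move=> e he; rewrite /cll subr0 in he.
  case: (ev_int v he hBc) => N hN; exists N => m n hm hn.
  rewrite /cll.
  have -> : e - d (x m) (x n) = (e - B N *: v) + (B N *: v - d (x m) (x n)).
    by rewrite addrA subrK.
  exact: (int_add hP (hN N (leqnn N)) (hdist2 N m n hm hn)).
case: (hcomp x hcauchy) => xs hxs.
have hphixs m : cle P (phi xs) (k ^+ m *: v).
  case: hphi => hlsc _.
  apply: (hlsc (k ^+ m *: v) (fun j => x (m + j)%N) xs).
    move=> j /=; apply: (cle_trans hP (hphin (m + j)%N)).
    by apply: (cle_scale_r hP) => //; rewrite ler_wiXn2l // leq_addr.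
  move=> e he; case: (hxs e he) => N hN; exists N => n hn; apply: hN.
  exact: (leq_trans hn (leq_addl m n)).
have hk : (fun m => k ^+ m) @ \oo --> (0:R).
  by apply: cvg_expr; rewrite ger0_norm.
have hneg : P (- phi xs).
  have hc := @cvg_affine R E _ v (- phi xs) hk.
  apply: (closed_cvg _ _ _ _ hc); first by case: hP.
  apply: nearW => m /=; rewrite addrC; exact: (hphixs m).
have hphi0 : phi xs = 0 by apply: (Pantisym hP) => //; exact: (dset_ge0 hP hd hex).
case: (hS 1 ltr01) => g [hgT hgd].
have := hgd xs; rewrite -/(phi xs) hphi0 scaler0 /cle sub0r => hn.
have hd0 : d xs (g xs) = 0 by apply: (Pantisym hP) => //; exact: (d_ge0 hP hd).
have heq := (proj1 hd xs (g xs)).1 hd0.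
exists xs; rewrite {2}heq; exact: hgT.
Qed.
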